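(* Let $\varepsilon\in(0,1/256]$, $\tau\in\Gamma$, $\mathcal S=\mathcal S(\tau)$ and $\rho\in\{1,\dots,\lceil1/\varepsilon\rceil\}^{|\tau|}$. Every extreme point $x^*$ of $P(\mathcal S,\rho)$ can be rounded to an integral vector $\bar x\in P(\mathcal S,\rho)\cap\{0,1\}^n$ with $c^T\bar x\le(1+2\varepsilon)\,c^Tx^*$.
   Context: Minimum Knapsack data: $n$ items with costs $c\in\mathbb{R}^n_{\ge0}$, weights $w\in\mathbb{R}^n_{\ge0}$, target $b$; items are indexed so that $1=c_1\ge c_2\ge\dots\ge c_n$. $C_\varepsilon=\lceil\log_{1+\varepsilon}(1/\varepsilon)\rceil$. $\Gamma$ is the set of integer vectors $\tau=(\tau_1,\dots,\tau_K)\in\mathbb{Z}_{\ge0}^K$ with $0\le K=|\tau|\le\lceil2\sqrt{C_\varepsilon}\rceil$, $\tau_k+k\le\tau_{k+1}$ for $k\in[K-1]$, and $\tau_K\le C_\varepsilon-1$. For $\tau\in\Gamma$, $\mathcal S(\tau)=\{S_1,\dots,S_K,S_\infty\}$ where $S_k=\{i\in\{2,\dots,n\}:(1+\varepsilon)^{-\tau_k}\ge c_i>(1+\varepsilon)^{-\min\{\tau_k+k,C_\varepsilon\}}\}$ for $k\in[K]$, and $S_\infty=\{i\in\{2,\dots,n\}: c_i\le(1+\varepsilon)^{-C_\varepsilon}\text{ and } c_i<\min_{l\in S_K}c_l\}$ (the second condition omitted if $K=0$). For $\rho\in\{1,\dots,\lceil1/\varepsilon\rceil\}^K$, $P(\mathcal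 S,\rho)$ is the set of $x\in\mathbb{R}^n$ with: $x_1=1$; $w^Tx\ge b$; $\sum_{i\in S_k}x_i=\rho_k$ for $k\in[K]$ with $\rho_k<\lceil1/\varepsilon\rceil$; $\sum_{i\in S_k}x_i\ge\rho_k$ for $k\in[K]$ with $\rho_k=\lceil1/\varepsilon\rceil$; $x_i=0$ for $i\in\{2,\dots,n\}\setminus\bigcup_{k\in[K]\cup\{\infty\}}S_k$; $0\le x_i\le1$ for $i\in\bigcup_{k\in[K]\cup\{\infty\}}S_k$. *)

(* Defs.v *)
From Stdlib Require Import Reals Lra Lia List.
Import ListNotations.
Open Scope R_scope.
Local Open Scope bool_scope.

(* Items are indexed 1..n; vectors are functions nat -> R (only indices
   1..n are meaningful). *)

(* ceiling of a real: 1 - up(-x) = -floor(-x) *)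
Definition Rceil (x : R) : Z := (1 - up (- x))%Z.

Definition Ceps (eps : R) : nat := Z.to_nat (Rceil (ln (1 / eps) / ln (1 + eps))).

Definition Meps (eps : R) : nat := Z.to_nat (Rceil (1 / eps)).

Fixpoint sum_to (f : nat -> R) (n : nat) : R :=
  match n with
  | O => 0
  | S m => sum_to f m + f (S m)
  end.

Definition Rleb (a b : R) : bool := if Rle_dec a b then true else false.
Definition Rltb (a b : R) : bool := if Rlt_dec a b then true else false.

Definition nth1 (l : list nat) (k : nat) : nat := nth (k - 1) l 0%nat.

Definition in_Gamma (eps : R) (tau : list nat) : Prop :=
  let C := Ceps eps in
  let K := length tau in
  (IZR (Z.of_nat K) <= IZR (Rceil (2 * sqrt (INR C))))%R /\
  (forall k, (1 <= k <= K - 1)%nat -> (nth1 tau k + k <= nth1 tau (k + 1))%nat) /\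
  ((K > 0)%nat -> (nth1 tau K + 1 <= C)%nat).

Definition inS (eps : R) (n : nat) (c : nat -> R) (tau : list nat) (k i : nat) : bool :=
  let C := Ceps eps in
  let tk := nth1 tau k in
  Nat.leb 2 i && Nat.leb i n &&
  Rleb (c i) (/ (1 + eps) ^ tk) &&
  Rltb (/ (1 + eps) ^ (Nat.min (tk + k) C)) (c i).

(* i in S_infinity; min over an empty S_K is +infinity *)
Definition inSinf (eps : R) (n : nat) (c : nat -> R) (tau : list nat) (i : nat) : bool :=
  let C := Ceps eps in
  let K := length tau in
  Nat.leb 2 i && Nat.leb i n &&
  Rleb (c i) (/ (1 + eps) ^ C) &&
  (Nat.eqb K 0 ||
   forallb (fun l => negb (inS eps n c tau K l) || Rltb (c i) (c l)) (seq 1 n)).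

Definition inUnion (eps : R) (n : nat) (c : nat -> R) (tau : list nat) (i : nat) : bool :=
  existsb (fun k => inS eps n c tau k i) (seq 1 (length tau)) || inSinf eps n c tau i.

Definition valid_rho (eps : R) (tau rho : list nat) : Prop :=
  length rho = length tau /\
  forall k, (1 <= k <= length rho)%nat -> (1 <= nth1 rho k <= Meps eps)%nat.

Definition inP (eps : R) (n : nat) (c w : nat -> R) (b : R) (tau rho : list nat)
  (x : nat -> R) : Prop :=
  x 1%nat = 1 /\
  sum_to (fun i => w i * x i) n >= b /\
  (forall k, (1 <= k <= length tau)%nat ->
     let s := sum_to (fun i => if inS eps n c tau k i then x i else 0) n in
     ((nth1 rho k < Meps eps)%nat -> s = INR (nth1 rho k)) /\
     (nth1 rho k = Meps eps -> s >= INR (nth1 rho k))) /\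
  (forall i, (2 <= i <= n)%nat -> inUnion eps n c tau i = false -> x i = 0) /\
  (forall i, (2 <= i <= n)%nat -> inUnion eps n c tau i = true -> 0 <= x i <= 1).

Definition extreme_point (n : nat) (P : (nat -> R) -> Prop) (x : nat -> R) : Prop :=
  P x /\
  forall y z lam, P y -> P z -> 0 < lam < 1 ->
    (forall i, (1 <= i <= n)%nat -> x i = lam * y i + (1 - lam) * z i) ->
    forall i, (1 <= i <= n)%nat -> y i = z i.

Definition is01 (n : nat) (x : nat -> R) : Prop :=
  forall i, (1 <= i <= n)%nat -> x i = 0 \/ x i = 1.

(* Main.v *)
Require Import Defs.
From Stdlib Require Import Reals List Lra Lia ZArith Classical Bool.
Open Scope R_scope.

Lemma sum_to_ext f g n : (forall i, (1 <= i <= n)%nat -> f i = g i) -> sum_to f n = sum_to g n.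
Proof.
  induction n; intros H; simpl; auto.
  rewrite IHn by (intros; apply H; lia). rewrite H by lia. reflexivity.
Qed.

Lemma sum_to_plus f g n : sum_to (fun i => f i + g i) n = sum_to f n + sum_to g n.
Proof. induction n; simpl; [lra|]. rewrite IHn. lra. Qed.

Lemma sum_to_scal a f n : sum_to (fun i => a * f i) n = a * sum_to f n.
Proof. induction n; simpl; [lra|]. rewrite IHn. lra. Qed.

Lemma sum_to_le f g n : (forall i, (1 <= i <= n)%nat -> f i <= g i) -> sum_to f n <= sum_to g n.
Proof.
  induction n; intros H; simpl; [lra|].
  assert (sum_to f n <= sum_to g n) by (apply IHn; intros; apply H; lia).
  assert (f (S n) <= g (S n)) by (apply H; lia). lra.
Qed.

Lemma sum_to_zero f n : (forall i, (1 <= i <= n)%nat -> f i = 0) -> sum_to f n = 0.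
Proof.
  intros H. rewrite (sum_to_ext f (fun _ => 0)) by auto.
  clear H. induction n; simpl; lra.
Qed.

Lemma sum_to_split_point f n m : (1 <= m <= n)%nat ->
  sum_to f n = f m + sum_to (fun i => if Nat.eqb i m then 0 else f i) n.
Proof.
  induction n; intros Hm; [lia|].
  cbn [sum_to]. destruct (Nat.eq_dec m (S n)) as [->|Hne].
  - rewrite Nat.eqb_refl.
    rewrite (sum_to_ext (fun i => if Nat.eqb i (S n) then 0 else f i) f).
    + lra.
    + intros i Hi. destruct (Nat.eqb_spec i (S n)); [lia|auto].
  - rewrite IHn by lia. destruct (Nat.eqb_spec (S n) m); [lia|]. lra.
Qed.

Lemma sum_to_point f n m : (1 <= m <= n)%nat ->
  (forall i, (1 <= i <= n)%nat -> i <> m -> f i = 0) -> sum_to f n = f m.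
Proof.
  intros Hm H. rewrite (sum_to_split_point f n m Hm).
  rewrite sum_to_zero; [lra|]. intros i Hi. destruct (Nat.eqb_spec i m); auto.
Qed.

Lemma sum_to_ind01 f n : (forall i, (1 <= i <= n)%nat -> f i = 0 \/ f i = 1) ->
  exists N, sum_to f n = INR N.
Proof.
  induction n; intros H; simpl.
  - exists 0%nat. reflexivity.
  - destruct IHn as [N HN]. intros; apply H; lia.
    destruct (H (S n)) as [E|E]; [lia| |]; rewrite HN, E.
    + exists N. lra.
    + exists (S N). rewrite S_INR. lra.
Qed.

Lemma sum_to_swap (F : nat -> nat -> R) n k :
  sum_to (fun i => sum_to (fun m => F m i) k) n = sum_to (fun m => sum_to (fun i => F m i) n) k.
Proof.
  induction k; simpl.
  - apply sum_to_zero. auto.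
  - rewrite sum_to_plus. rewrite IHk. reflexivity.
Qed.

Lemma sum_to_const_ge f p a : (forall m, (1 <= m <= p)%nat -> a <= f m) -> INR p * a <= sum_to f p.
Proof.
  induction p; intros H; cbn [sum_to]; [simpl; lra|].
  rewrite S_INR. assert (INR p * a <= sum_to f p) by (apply IHp; intros; apply H; lia).
  assert (a <= f (S p)) by (apply H; lia). lra.
Qed.

Lemma small_exists (Q : nat -> R -> Prop) N :
  (forall i, (1 <= i <= N)%nat -> exists t, 0 < t /\ forall s, 0 < s <= t -> Q i s) ->
  exists t, 0 < t /\ forall i, (1 <= i <= N)%nat -> forall s, 0 < s <= t -> Q i s.
Proof.
  induction N; intros H.
  - exists 1. split; [lra|]. intros; lia.
  - destruct IHN as [t1 [Ht1 H1]]. intros; apply H; lia.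
    destruct (H (S N)) as [t2 [Ht2 H2]]; [lia|].
    exists (Rmin t1 t2). split. apply Rmin_pos; auto.
    intros i Hi s Hs. pose proof (Rmin_l t1 t2). pose proof (Rmin_r t1 t2).
    destruct (Nat.eq_dec i (S N)) as [->|Hne].
    + apply H2. lra.
    + apply H1. lia. lra.
Qed.

Lemma int_gap a b y : INR a - INR b = y -> 0 < y < 1 -> False.
Proof.
  intros E Hy. destruct (le_lt_dec a b) as [H|H].
  - apply le_INR in H. lra.
  - assert (INR (S b) <= INR a) by (apply le_INR; lia). rewrite S_INR in H0. lra.
Qed.

Lemma int_gap2 a b y : INR a - INR b = y -> 0 < y < 2 -> y = 1.
Proof.
  intros E Hy. destruct (le_lt_dec a b) as [H|H].
  - apply le_INR in H. lra.
  - destruct (Nat.eq_dec a (S b)) as [->|Hne].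
    + rewrite S_INR in E. lra.
    + assert (INR (S (S b)) <= INR a) by (apply le_INR; lia). rewrite !S_INR in H0. lra.
Qed.

Lemma Rceil_ge y : y <= IZR (Rceil y).
Proof.
  unfold Rceil. rewrite minus_IZR. destruct (archimed (- y)). lra.
Qed.

Lemma INR_toNat_ge z : IZR z <= INR (Z.to_nat z).
Proof.
  destruct (Z_lt_le_dec z 0).
  - apply IZR_lt in l. pose proof (pos_INR (Z.to_nat z)). lra.
  - rewrite INR_IZR_INZ, Z2Nat.id by auto. lra.
Qed.

Lemma sum_to_nonneg f n : (forall i, (1 <= i <= n)%nat -> 0 <= f i) -> 0 <= sum_to f n.
Proof.
  intros H. rewrite <- (sum_to_zero (fun _ => 0) n) by auto. apply sum_to_le. auto.
Qed.

Lemma sum_two f n l m : (1 <= l <= n)%nat -> (1 <= m <= n)%nat -> l <> m ->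
  (forall i, (1 <= i <= n)%nat -> i <> l -> i <> m -> f i = 0) -> sum_to f n = f l + f m.
Proof.
  intros Hl Hm Hne H. rewrite (sum_to_split_point f n l Hl).
  rewrite (sum_to_point _ n m Hm).
  - destruct (Nat.eqb_spec m l); [lia|]. reflexivity.
  - intros i Hi Him. destruct (Nat.eqb_spec i l); auto.
Qed.

Section Main.
Variables (n : nat) (c w : nat -> R) (b eps : R) (tau rho : list nat) (x : nat -> R).
Hypothesis hn : (1 <= n)%nat.
Hypothesis hc_nonneg : forall i, (1 <= i <= n)%nat -> 0 <= c i.
Hypothesis hw_nonneg : forall i, (1 <= i <= n)%nat -> 0 <= w i.
Hypothesis hc1 : c 1%nat = 1.
Hypothesis heps : 0 < eps <= 1 / 256.
Hypothesis htau : in_Gamma eps tau.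
Hypothesis hrho : valid_rho eps tau rho.
Hypothesis hP : inP eps n c w b tau rho x.
Hypothesis hext : forall y z lam, inP eps n c w b tau rho y -> inP eps n c w b tau rho z -> 0 < lam < 1 ->
    (forall i, (1 <= i <= n)%nat -> x i = lam * y i + (1 - lam) * z i) ->
    forall i, (1 <= i <= n)%nat -> y i = z i.

Local Notation SS k i := (inS eps n c tau k i).
Local Notation K := (length tau).
Local Notation M := (Meps eps).
Local Notation C := (Ceps eps).
Local Notation gs k f := (sum_to (fun i => if inS eps n c tau k i then f i else 0) n).
Local Notation frac i := ((2 <= i <= n)%nat /\ 0 < x i < 1).
Local Notation ip p := (/ (1 + eps) ^ p).

Lemma L_inS k i : SS k i = true -> (2 <= i <= n)%nat /\ c i <= ip (nth1 tau k) /\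
   ip (Nat.min (nth1 tau k + k) C) < c i.
Proof.
  unfold inS. cbv zeta. intros H.
  apply andb_prop in H as [H H4]; apply andb_prop in H as [H H3]; apply andb_prop in H as [H1 H2].
  apply Nat.leb_le in H1; apply Nat.leb_le in H2.
  unfold Rleb in H3; unfold Rltb in H4.
  destruct (Rle_dec _ _); [|discriminate]. destruct (Rlt_dec _ _); [|discriminate].
  repeat split; auto.
Qed.

Lemma L_inSinf i : inSinf eps n c tau i = true -> (2 <= i <= n)%nat /\ c i <= ip C.
Proof.
  unfold inSinf. cbv zeta. intros H.
  apply andb_prop in H as [H H4]; apply andb_prop in H as [H H3]; apply andb_prop in H as [H1 H2].
  apply Nat.leb_le in H1; apply Nat.leb_le in H2.
  unfold Rleb in H3. destruct (Rle_dec _ _); [|discriminate]. repeat split; auto.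
Qed.

Lemma L_union i : inUnion eps n c tau i = true ->
  (exists k, (1 <= k <= K)%nat /\ SS k i = true) \/ inSinf eps n c tau i = true.
Proof.
  unfold inUnion. intros H. apply orb_prop in H as [H|H]; [left|right; auto].
  apply existsb_exists in H as [k [Hk Hs]]. apply in_seq in Hk. exists k. split; [lia|auto].
Qed.

Lemma L_union_S k i : (1 <= k <= K)%nat -> SS k i = true -> inUnion eps n c tau i = true.
Proof.
  intros Hk Hs. unfold inUnion. apply orb_true_intro. left.
  apply existsb_exists. exists k. split; auto. apply in_seq. lia.
Qed.

Lemma L_union_inf i : inSinf eps n c tau i = true -> inUnion eps n c tau i = true.
Proof. intros H. unfold inUnion. rewrite H. apply orb_true_r. Qed.

Lemma q_pos p : 0 < (1 + eps) ^ p.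
Proof. apply pow_lt. lra. Qed.

Lemma ip_pos p : 0 < ip p.
Proof. apply Rinv_0_lt_compat, q_pos. Qed.

Lemma ip_le p q : (p <= q)%nat -> ip q <= ip p.
Proof.
  intros H. apply Rinv_le_contravar. apply q_pos. apply Rle_pow; [lra|auto].
Qed.

Lemma ip_le1 p : ip p <= 1.
Proof. pose proof (ip_le 0 p ltac:(lia)) as H. simpl in H. rewrite Rinv_1 in H. exact H. Qed.

Lemma ip_bern k : 1 - INR k * eps <= ip k.
Proof.
  induction k.
  - simpl. lra.
  - rewrite S_INR. rewrite <- tech_pow_Rmult. rewrite Rinv_mult.
    assert (Ht : / (1 + eps) * (1 + eps) = 1) by (field; lra).
    assert (Htp : 0 < / (1 + eps)) by (apply Rinv_0_lt_compat; lra).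
    pose proof (ip_pos k).
    destruct (Rle_dec (1 - INR k * eps) 0).
    + assert (0 < / (1 + eps) * ip k) by (apply Rmult_lt_0_compat; auto). lra.
    + assert ((1 - INR k * eps) * / (1 + eps) <= / (1 + eps) * ip k) by nra.
      assert (1 - (INR k + 1) * eps <= (1 - INR k * eps) * / (1 + eps)).
      { apply (Rmult_le_reg_r (1 + eps)); [lra|].
        replace ((1 - INR k * eps) * / (1 + eps) * (1 + eps)) with (1 - INR k * eps) by (field; lra).
        pose proof (pos_INR k). nra. }
      lra.
Qed.

Lemma ipC_le_eps : ip C <= eps.
Proof.
  assert (HC : ln (1 / eps) / ln (1 + eps) <= INR C).
  { unfold Ceps. eapply Rle_trans; [apply Rceil_ge|apply INR_toNat_ge]. }
  assert (Hl : 0 < ln (1 + eps)) by (rewrite <- ln_1; apply ln_increasing; lra).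
  assert (H1 : ln (1 / eps) <= INR C * ln (1 + eps)).
  { apply (Rmult_le_compat_r (ln (1 + eps))) in HC; [|lra].
    unfold Rdiv in HC. rewrite Rmult_assoc, Rinv_l in HC by lra. lra. }
  assert (H2 : 1 / eps <= (1 + eps) ^ C).
  { destruct (Rle_dec (1 / eps) ((1 + eps) ^ C)) as [?|Hn]; auto.
    exfalso. apply Rnot_le_lt in Hn. apply ln_increasing in Hn; [|apply q_pos].
    rewrite ln_pow in Hn by lra. lra. }
  assert (E : / (1 / eps) = eps) by (field; lra).
  apply Rle_trans with (/ (1 / eps)); [|rewrite E; lra].
  apply Rinv_le_contravar; auto. unfold Rdiv; rewrite Rmult_1_l. apply Rinv_0_lt_compat; lra.
Qed.

Lemma M_ge : 1 / eps <= INR M.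
Proof. unfold Meps. eapply Rle_trans; [apply Rceil_ge|apply INR_toNat_ge]. Qed.

Lemma tau_chain m k : (1 <= m)%nat -> (m < k)%nat -> (k <= K)%nat -> (nth1 tau m + m <= nth1 tau k)%nat.
Proof.
  destruct htau as [_ [Hch _]]. intros Hm Hmk HkK.
  induction k; [lia|].
  destruct (Nat.eq_dec m k) as [->|Hne].
  - replace (S k) with (k + 1)%nat by lia. apply Hch. lia.
  - assert (nth1 tau m + m <= nth1 tau k)%nat by (apply IHk; lia).
    assert (nth1 tau k + k <= nth1 tau (k + 1))%nat by (apply Hch; lia).
    replace (S k) with (k + 1)%nat by lia. lia.
Qed.

Lemma S_disj m k i : (1 <= m <= K)%nat -> (1 <= k <= K)%nat -> SS m i = true -> SS k i = true -> m = k.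
Proof.
  intros Hm Hk H1 H2.
  assert (Hlt : forall m k, (1 <= m)%nat -> (m < k)%nat -> (k <= K)%nat -> SS m i = true -> SS k i = true -> False).
  { clear m k Hm Hk H1 H2. intros m k Hm Hmk HkK H1 H2.
    apply L_inS in H1 as [_ [_ H1]]. apply L_inS in H2 as [_ [H2 _]].
    pose proof (tau_chain m k Hm Hmk HkK).
    assert (ip (nth1 tau k) <= ip (Nat.min (nth1 tau m + m) C)) by (apply ip_le; lia). lra. }
  destruct (lt_eq_lt_dec m k) as [[H|H]|H]; auto.
  - exfalso. apply (Hlt m k); auto; lia.
  - exfalso. apply (Hlt k m); auto; lia.
Qed.

Lemma Sinf_disj k i : inSinf eps n c tau i = true -> SS k i = true -> False.
Proof.
  intros H1 H2. apply L_inSinf in H1 as [_ H1]. apply L_inS in H2 as [_ [_ H2]].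
  assert (ip C <= ip (Nat.min (nth1 tau k + k) C)) by (apply ip_le; lia). lra.
Qed.


Lemma x1 : x 1%nat = 1.
Proof. destruct hP as [H _]; exact H. Qed.

Lemma xzero i : (2 <= i <= n)%nat -> inUnion eps n c tau i = false -> x i = 0.
Proof. destruct hP as [_ [_ [_ [H _]]]]; apply H. Qed.

Lemma xbnd i : (2 <= i <= n)%nat -> inUnion eps n c tau i = true -> 0 <= x i <= 1.
Proof. destruct hP as [_ [_ [_ [_ H]]]]; apply H. Qed.

Lemma xnn i : (1 <= i <= n)%nat -> 0 <= x i.
Proof.
  intros Hi. destruct (Nat.eq_dec i 1) as [->|Hne]; [rewrite x1; lra|].
  destruct (inUnion eps n c tau i) eqn:E.
  - apply xbnd; auto; lia.
  - rewrite xzero; [lra|lia|auto].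
Qed.

Lemma x01 i : (1 <= i <= n)%nat -> ~ frac i -> x i = 0 \/ x i = 1.
Proof.
  intros Hi Hf. destruct (Nat.eq_dec i 1) as [->|Hne]; [right; apply x1|].
  destruct (inUnion eps n c tau i) eqn:E.
  - pose proof (xbnd i ltac:(lia) E).
    destruct (Req_dec (x i) 0); [left; auto|]. destruct (Req_dec (x i) 1); [right; auto|].
    exfalso. apply Hf. split; [lia|lra].
  - left. apply xzero; auto; lia.
Qed.

Lemma frac_union i : frac i -> inUnion eps n c tau i = true.
Proof.
  intros [Hi Hx]. destruct (inUnion eps n c tau i) eqn:E; auto.
  rewrite xzero in Hx; auto. lra.
Qed.

Lemma rho_rng k : (1 <= k <= K)%nat -> (1 <= nth1 rho k <= M)%nat.
Proof. destruct hrho as [Hl Hr]. intros Hk. apply Hr. lia. Qed.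

Lemma grp k : (1 <= k <= K)%nat ->
  ((nth1 rho k < M)%nat -> gs k x = INR (nth1 rho k)) /\
  (nth1 rho k = M -> gs k x >= INR (nth1 rho k)).
Proof. destruct hP as [_ [_ [H _]]]. intros Hk. specialize (H k Hk). cbv zeta in H. exact H. Qed.

Definition slack k := nth1 rho k = M /\ gs k x > INR M.

Lemma gs_ge k : (1 <= k <= K)%nat -> gs k x >= INR (nth1 rho k).
Proof.
  intros Hk. destruct (grp k Hk) as [H1 H2]. pose proof (rho_rng k Hk).
  destruct (Nat.eq_dec (nth1 rho k) M); [apply H2; auto|]. rewrite H1 by lia. lra.
Qed.

Lemma gs_nonslack k : (1 <= k <= K)%nat -> ~ slack k -> gs k x = INR (nth1 rho k).
Proof.
  intros Hk Hs. destruct (grp k Hk) as [H1 H2]. pose proof (rho_rng k Hk).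
  destruct (Nat.eq_dec (nth1 rho k) M) as [E|E]; [|apply H1; lia].
  specialize (H2 E). destruct (Rle_dec (gs k x) (INR M)).
  - rewrite E in *. lra.
  - exfalso. apply Hs. split; auto. lra.
Qed.

Definition Adm (d : nat -> R) : Prop :=
  (forall i, (1 <= i <= n)%nat -> d i <> 0 -> frac i) /\
  (forall k, (1 <= k <= K)%nat -> gs k d = 0 \/ slack k).

Lemma gs_lin k u v al be : gs k (fun i => al * u i + be * v i) = al * gs k u + be * gs k v.
Proof.
  rewrite (sum_to_ext _ (fun i => al * (if SS k i then u i else 0) + be * (if SS k i then v i else 0))).
  - rewrite sum_to_plus, !sum_to_scal. reflexivity.
  - intros i _. destruct (SS k i); ring.
Qed.

Lemma Adm_lin u v al be : Adm u -> Adm v -> Adm (fun i => al * u i + be * v i).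
Proof.
  intros [Su Gu] [Sv Gv]. split.
  - intros i Hi Hd. destruct (Req_dec (u i) 0) as [E|E]; [|apply Su; auto].
    destruct (Req_dec (v i) 0) as [E'|E']; [|apply Sv; auto].
    exfalso. apply Hd. rewrite E, E'. ring.
  - intros k Hk. rewrite gs_lin.
    destruct (Gu k Hk) as [E|E]; [|right; auto]. destruct (Gv k Hk) as [E'|E']; [|right; auto].
    left. rewrite E, E'. ring.
Qed.

Lemma pert_inP d s : Adm d -> sum_to (fun i => w i * d i) n = 0 ->
  (forall i, (1 <= i <= n)%nat -> d i <> 0 -> 0 <= x i + s * d i <= 1) ->
  (forall k, (1 <= k <= K)%nat -> slack k -> gs k x + s * gs k d >= INR M) ->
  inP eps n c w b tau rho (fun i => x i + s * d i).
Proof.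
  intros [Hs Hg] Hw Hb Hk. destruct hP as [P1 [P2 [P3 [P4 P5]]]].
  unfold inP. split; [|split; [|split; [|split]]].
  - destruct (Req_dec (d 1%nat) 0) as [E|E].
    + rewrite E, P1. ring.
    + exfalso. destruct (Hs 1%nat ltac:(lia) E). lia.
  - rewrite (sum_to_ext _ (fun i => w i * x i + s * (w i * d i))) by (intros; ring).
    rewrite sum_to_plus, sum_to_scal, Hw. lra.
  - intros k Hk'. cbv beta zeta.
    rewrite (sum_to_ext _ (fun i => 1 * (if SS k i then x i else 0) + s * (if SS k i then d i else 0)))
      by (intros i _; destruct (SS k i); ring).
    rewrite sum_to_plus, !sum_to_scal. specialize (P3 k Hk'). cbv zeta in P3.
    destruct (Hg k Hk') as [E|Sl].
    + rewrite E. rewrite Rmult_0_r, Rplus_0_r, Rmult_1_l. exact P3.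
    + destruct Sl as [Er Sg]. split; intros; [lia|]. rewrite Er, Rmult_1_l. apply Hk; auto. split; auto.
  - intros i Hi Hu. rewrite (P4 i Hi Hu).
    destruct (Req_dec (d i) 0) as [E|E]; [rewrite E; ring|].
    destruct (Hs i ltac:(lia) E) as [_ Hx]. rewrite (P4 i Hi Hu) in Hx. lra.
  - intros i Hi Hu. destruct (Req_dec (d i) 0) as [E|E].
    + rewrite E. rewrite Rmult_0_r, Rplus_0_r. auto.
    + apply Hb; auto; lia.
Qed.

Lemma key d : Adm d -> sum_to (fun i => w i * d i) n = 0 -> forall i, (1 <= i <= n)%nat -> d i = 0.
Proof.
  intros HA Hw. pose proof HA as [Hs Hg].
  destruct (small_exists (fun i s => d i <> 0 -> 0 <= x i + s * d i <= 1 /\ 0 <= x i - s * d i <= 1) n)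
    as [t1 [Ht1 H1]].
  { intros i Hi. destruct (Req_dec (d i) 0) as [E|E].
    - exists 1. split; [lra|]. intros s _ Hn. contradiction.
    - destruct (Hs i Hi E) as [_ [Hx0 Hx1]].
      assert (Ha : 0 < Rabs (d i)) by (apply Rabs_pos_lt; auto).
      exists (Rmin (x i) (1 - x i) / Rabs (d i)). split.
      + apply Rdiv_lt_0_compat; [apply Rmin_pos; lra|auto].
      + intros s [Hs0 Hst] _.
        assert (Hm : s * Rabs (d i) <= Rmin (x i) (1 - x i)).
        { apply (Rmult_le_compat_r (Rabs (d i))) in Hst; [|lra]. unfold Rdiv in Hst.
          rewrite Rmult_assoc, Rinv_l in Hst by lra. lra. }
        pose proof (Rmin_l (x i) (1 - x i)). pose proof (Rmin_r (x i) (1 - x i)).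
        assert (Rabs (s * d i) = s * Rabs (d i)) by (rewrite Rabs_mult, (Rabs_right s) by lra; ring).
        pose proof (Rle_abs (s * d i)). pose proof (Rle_abs (- (s * d i))). rewrite Rabs_Ropp in *.
        lra. }
  destruct (small_exists (fun k s => slack k -> gs k x + s * gs k d >= INR M /\ gs k x - s * gs k d >= INR M) K)
    as [t2 [Ht2 H2]].
  { intros k Hk. destruct (classic (slack k)) as [Sl|Sl].
    - destruct Sl as [_ Sg]. exists ((gs k x - INR M) / (Rabs (gs k d) + 1)). split.
      + apply Rdiv_lt_0_compat; [lra|]. pose proof (Rabs_pos (gs k d)). lra.
      + intros s [Hs0 Hst] _. set (g := gs k d) in *. set (G := gs k x) in *.
        pose proof (Rabs_pos g).
        assert (s * (Rabs g + 1) <= G - INR M).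
        { apply (Rmult_le_compat_r (Rabs g + 1)) in Hst; [|lra]. unfold Rdiv in Hst.
          rewrite Rmult_assoc, Rinv_l in Hst by lra. lra. }
        assert (Rabs (s * g) = s * Rabs g) by (rewrite Rabs_mult, (Rabs_right s) by lra; ring).
        pose proof (Rle_abs (s * g)). pose proof (Rle_abs (- (s * g))). rewrite Rabs_Ropp in *.
        lra.
    - exists 1. split; [lra|]. intros; contradiction. }
  set (t := Rmin t1 t2).
  assert (Ht : 0 < t) by (apply Rmin_pos; auto).
  assert (Htt : 0 < t <= t1 /\ 0 < t <= t2) by (pose proof (Rmin_l t1 t2) as A1; pose proof (Rmin_r t1 t2) as A2; fold t in A1, A2; lra).
  assert (Y : inP eps n c w b tau rho (fun i => x i + t * d i)).
  { apply pert_inP; auto.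
    - intros i Hi Hd. apply (H1 i Hi t); auto. lra.
    - intros k Hk Sl. apply (H2 k Hk t); auto. lra. }
  assert (Z : inP eps n c w b tau rho (fun i => x i + (- t) * d i)).
  { apply pert_inP; auto.
    - intros i Hi Hd. replace (x i + - t * d i) with (x i - t * d i) by ring.
      apply (H1 i Hi t); auto. lra.
    - intros k Hk Sl. replace (gs k x + - t * gs k d) with (gs k x - t * gs k d) by ring.
      apply (H2 k Hk t); auto. lra. }
  intros i Hi.
  pose proof (hext _ _ (1/2) Y Z ltac:(lra)) as E.
  assert (E' : x i + t * d i = x i + - t * d i).
  { apply E; auto. intros j _. field. }
  assert (t * d i = 0) by lra.
  apply Rmult_integral in H as [H|H]; auto. lra.
Qed.

Lemma TD u v p q : Adm u -> Adm v -> (1 <= p <= n)%nat -> (1 <= q <= n)%nat ->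
  u p <> 0 -> v p = 0 -> v q <> 0 -> u q = 0 -> False.
Proof.
  intros Au Av Hp Hq H1 H2 H3 H4.
  set (A := sum_to (fun i => w i * v i) n). set (B := sum_to (fun i => w i * u i) n).
  assert (Ad := Adm_lin u v A (- B) Au Av).
  assert (Hw : sum_to (fun i => w i * (A * u i + - B * v i)) n = 0).
  { rewrite (sum_to_ext _ (fun i => A * (w i * u i) + (- B) * (w i * v i))) by (intros; ring).
    rewrite sum_to_plus, !sum_to_scal. fold A B. ring. }
  pose proof (key _ Ad Hw p Hp) as Ep. pose proof (key _ Ad Hw q Hq) as Eq.
  simpl in Ep, Eq. rewrite H2 in Ep. rewrite H4 in Eq.
  assert (A = 0) by (assert (A * u p = 0) by lra; apply Rmult_integral in H as [H|H]; auto; contradiction).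
  assert (B = 0) by (assert (B * v q = 0) by lra; apply Rmult_integral in H0 as [H0|H0]; auto; contradiction).
  apply H1. apply (key u Au); auto.
Qed.

Definition e (j : nat) : nat -> R := fun i => if Nat.eqb i j then 1 else 0.

Lemma gs_e k j : (1 <= j <= n)%nat -> gs k (e j) = if SS k j then 1 else 0.
Proof.
  intros Hj. rewrite (sum_to_point _ n j Hj).
  - unfold e. rewrite Nat.eqb_refl. reflexivity.
  - intros i Hi Hne. unfold e. destruct (Nat.eqb_spec i j); [lia|]. destruct (SS k i); auto.
Qed.

Lemma e_eq j : e j j = 1.
Proof. unfold e. rewrite Nat.eqb_refl. reflexivity. Qed.

Lemma e_ne i j : i <> j -> e j i = 0.
Proof. unfold e. intros H. destruct (Nat.eqb_spec i j); [lia|auto]. Qed.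

Lemma e_supp j i : e j i <> 0 -> i = j.
Proof. unfold e. destruct (Nat.eqb_spec i j); auto. lra. Qed.

Lemma Adm_e_inf j : frac j -> inSinf eps n c tau j = true -> Adm (e j).
Proof.
  intros Hf Hi. split.
  - intros i _ H. apply e_supp in H. subst; auto.
  - intros k Hk. left. rewrite gs_e by lia. destruct (SS k j) eqn:E; auto.
    exfalso. apply (Sinf_disj k j); auto.
Qed.

Lemma Adm_e_slack k j : (1 <= k <= K)%nat -> SS k j = true -> slack k -> frac j -> Adm (e j).
Proof.
  intros Hk Hs Sl Hf. split.
  - intros i _ H. apply e_supp in H. subst; auto.
  - intros m Hm. rewrite gs_e by lia. destruct (SS m j) eqn:E; auto.
    right. rewrite (S_disj m k j); auto.
Qed.

Lemma Adm_pair k j j' : (1 <= k <= K)%nat -> SS k j = true -> SS k j' = true -> frac j -> frac j' ->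
  Adm (fun i => 1 * e j i + (-1) * e j' i).
Proof.
  intros Hk Hs Hs' Hf Hf'. split.
  - intros i _ H. destruct (Req_dec (e j i) 0) as [E|E].
    + destruct (Req_dec (e j' i) 0) as [E'|E']; [exfalso; apply H; rewrite E, E'; ring|].
      apply e_supp in E'; subst; auto.
    + apply e_supp in E; subst; auto.
  - intros m Hm. left. rewrite gs_lin, !gs_e by lia.
    destruct (SS m j) eqn:E; destruct (SS m j') eqn:E'; try ring.
    + rewrite (S_disj m k j) in E'; auto. congruence.
    + rewrite (S_disj m k j') in E; auto. congruence.
Qed.

Lemma INT k m : (1 <= k <= K)%nat -> ~ slack k -> SS k m = true -> frac m ->
  exists m', m' <> m /\ SS k m' = true /\ frac m'.
Proof.
  intros Hk Sl Hs Hf. destruct (classic (exists m', m' <> m /\ SS k m' = true /\ frac m')) as [H|H]; auto.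
  exfalso. pose proof (gs_nonslack k Hk Sl) as G.
  rewrite (sum_to_split_point _ n m) in G by lia. rewrite Hs in G.
  destruct (sum_to_ind01 (fun i => if Nat.eqb i m then 0 else if SS k i then x i else 0) n) as [N HN].
  { intros i Hi. destruct (Nat.eqb_spec i m); [left; auto|]. destruct (SS k i) eqn:E; [|left; auto].
    apply x01; auto. intros Hfi. apply H. exists i. auto. }
  rewrite HN in G. apply (int_gap (nth1 rho k) N (x m)); [lra|]. destruct Hf; auto.
Qed.

Lemma PAIR k l m : (1 <= k <= K)%nat -> (nth1 rho k < M)%nat -> SS k l = true -> SS k m = true -> l <> m ->
  frac l -> frac m -> (forall j, (1 <= j <= n)%nat -> SS k j = true -> frac j -> j = l \/ j = m) -> x l + x m = 1.
Proof.
  intros Hk Hr Hl Hm Hne Fl Fm Hall.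
  destruct (grp k Hk) as [G _]. specialize (G Hr).
  rewrite (sum_to_split_point _ n l) in G by lia. rewrite Hl in G.
  rewrite (sum_to_split_point _ n m) in G by lia.
  destruct (Nat.eqb_spec m l); [lia|]. rewrite Hm in G.
  destruct (sum_to_ind01 (fun i => if Nat.eqb i m then 0 else if Nat.eqb i l then 0 else if SS k i then x i else 0) n) as [N HN].
  { intros i Hi. destruct (Nat.eqb_spec i m); [left; auto|]. destruct (Nat.eqb_spec i l); [left; auto|].
    destruct (SS k i) eqn:E; [|left; auto].
    apply x01; auto. intros Hfi. destruct (Hall i Hi E Hfi); lia. }
  rewrite HN in G. apply (int_gap2 (nth1 rho k) N); [lra|]. destruct Fl, Fm. lra.
Qed.


Lemma DIR k m : (1 <= k <= K)%nat -> SS k m = true -> frac m ->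
  exists v, Adm v /\ v m <> 0 /\ forall j, (1 <= j <= n)%nat -> v j <> 0 -> SS k j = true.
Proof.
  intros Hk Hs Hf. destruct (classic (slack k)) as [Sl|Sl].
  - exists (e m). split; [apply (Adm_e_slack k); auto|]. split.
    + unfold e. rewrite Nat.eqb_refl. lra.
    + intros j _ H. apply e_supp in H. subst; auto.
  - destruct (INT k m Hk Sl Hs Hf) as [m' [Hne [Hs' Hf']]].
    exists (fun i => 1 * e m i + (-1) * e m' i). split; [apply (Adm_pair k); auto|]. split.
    + unfold e. rewrite Nat.eqb_refl. destruct (Nat.eqb_spec m m'); [lia|]. lra.
    + intros j _ H. destruct (Req_dec (e m j) 0) as [E|E].
      * destruct (Req_dec (e m' j) 0) as [E'|E']; [exfalso; apply H; rewrite E, E'; ring|].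
        apply e_supp in E'; subst; auto.
      * apply e_supp in E; subst; auto.
Qed.

Lemma ind_sum_le i v k : 0 <= v -> (k <= K)%nat -> sum_to (fun m => if SS m i then v else 0) k <= v.
Proof.
  intros Hv. induction k; intros Hk; cbn [sum_to]; [lra|].
  destruct (SS (Datatypes.S k) i) eqn:E.
  - rewrite sum_to_zero; [lra|]. intros m Hm. destruct (SS m i) eqn:E'; auto.
    pose proof (S_disj m (Datatypes.S k) i ltac:(lia) ltac:(lia) E' E). lia.
  - specialize (IHk ltac:(lia)). lra.
Qed.

Lemma Cx_nn : forall i, (1 <= i <= n)%nat -> 0 <= c i * x i.
Proof. intros i Hi. apply Rmult_le_pos; [apply hc_nonneg|apply xnn]; auto. Qed.

Lemma LB1 k : (k <= K)%nat ->
  1 + sum_to (fun m => sum_to (fun i => if SS m i then c i * x i else 0) n) k <= sum_to (fun i => c i * x i) n.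
Proof.
  intros Hk.
  rewrite <- (sum_to_swap (fun m i => if SS m i then c i * x i else 0)).
  assert (E1 : sum_to (fun i => if Nat.eqb i 1 then 1 else 0) n = 1).
  { rewrite (sum_to_point _ n 1); [reflexivity|lia|]. intros i _ H; destruct (Nat.eqb_spec i 1); [lia|auto]. }
  apply Rle_trans with (sum_to (fun i => (if Nat.eqb i 1 then 1 else 0) +
     sum_to (fun m => if SS m i then c i * x i else 0) k) n).
  { rewrite sum_to_plus, E1. lra. }
  apply sum_to_le. intros i Hi.
  destruct (Nat.eqb_spec i 1) as [->|Hne].
  - rewrite sum_to_zero. rewrite hc1, x1. lra.
    intros m _. destruct (SS m 1) eqn:E; auto. apply L_inS in E. lia.
  - pose proof (ind_sum_le i (c i * x i) k (Cx_nn i Hi) Hk). lra.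
Qed.

Lemma gsc_ge k : (1 <= k <= K)%nat ->
  ip (Nat.min (nth1 tau k + k) C) * INR (nth1 rho k) <= sum_to (fun i => if SS k i then c i * x i else 0) n.
Proof.
  intros Hk. set (L := ip (Nat.min (nth1 tau k + k) C)).
  apply Rle_trans with (L * gs k x).
  - apply Rmult_le_compat_l. apply Rlt_le, ip_pos. apply Rge_le, gs_ge; auto.
  - rewrite <- sum_to_scal. apply sum_to_le. intros i Hi. destruct (SS k i) eqn:E; [|lra].
    apply L_inS in E as [_ [_ E]]. apply Rmult_le_compat_r; [apply xnn; auto|]. fold L in E. lra.
Qed.

Lemma L_ge_a k : ip (nth1 tau k) * (1 - INR k * eps) <= ip (Nat.min (nth1 tau k + k) C).
Proof.
  apply Rle_trans with (ip (nth1 tau k + k)); [|apply ip_le; lia].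
  rewrite pow_add, Rinv_mult. apply Rmult_le_compat_l; [apply Rlt_le, ip_pos|apply ip_bern].
Qed.

Lemma LB2 k : (1 <= k <= K)%nat ->
  1 + (INR k - 1) * ip (nth1 tau k) + sum_to (fun i => if SS k i then c i * x i else 0) n
  <= sum_to (fun i => c i * x i) n.
Proof.
  intros Hk. pose proof (LB1 k ltac:(lia)) as H.
  replace k with (Datatypes.S (k - 1)) in H at 1 by lia. cbn [sum_to] in H.
  replace (Datatypes.S (k - 1)) with k in H by lia.
  assert (INR (k - 1) * ip (nth1 tau k) <=
     sum_to (fun m => sum_to (fun i => if SS m i then c i * x i else 0) n) (k - 1)).
  { apply sum_to_const_ge. intros m Hm.
    eapply Rle_trans; [|apply gsc_ge; lia].
    pose proof (rho_rng m ltac:(lia)). assert (1 <= INR (nth1 rho m)) by (replace 1 with (INR 1) by reflexivity; apply le_INR; lia).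
    assert (ip (nth1 tau k) <= ip (Nat.min (nth1 tau m + m) C)) by (apply ip_le; pose proof (tau_chain m k ltac:(lia) ltac:(lia) ltac:(lia)); lia).
    pose proof (ip_pos (Nat.min (nth1 tau m + m) C)). nra. }
  rewrite minus_INR in H0 by lia. simpl INR in H0. lra.
Qed.

Lemma RU l m : frac l -> frac m -> (forall j, (1 <= j <= n)%nat -> frac j -> j = l \/ j = m) ->
  (forall k, (1 <= k <= K)%nat -> (SS k l = true \/ SS k m = true) -> nth1 rho k = M) ->
  exists xb, inP eps n c w b tau rho xb /\ is01 n xb /\
    sum_to (fun i => c i * xb i) n <= sum_to (fun i => c i * x i) n + c l * (1 - x l) + c m * (1 - x m).
Proof.
  intros Fl Fm Hall Hg.
  set (dl := fun i => if orb (Nat.eqb i l) (Nat.eqb i m) then 1 - x i else 0).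
  assert (Hd0 : forall i, (1 <= i <= n)%nat -> 0 <= dl i).
  { intros i _. unfold dl. destruct (Nat.eqb_spec i l); destruct (Nat.eqb_spec i m); simpl; subst; lra. }
  assert (Hdz : forall i, i <> l -> i <> m -> dl i = 0).
  { intros i H1 H2. unfold dl. destruct (Nat.eqb_spec i l); destruct (Nat.eqb_spec i m); simpl; lia || lra. }
  assert (Hd1 : forall i, i = l \/ i = m -> x i + dl i = 1).
  { intros i H. unfold dl. destruct (Nat.eqb_spec i l); destruct (Nat.eqb_spec i m); simpl; try lra.
    destruct H; lia. }
  destruct hP as [P1 [P2 [P3 [P4 P5]]]].
  exists (fun i => x i + dl i). split; [|split].
  - unfold inP. split; [|split; [|split; [|split]]].
    + rewrite Hdz, P1 by (destruct Fl, Fm; lia). ring.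
    + rewrite (sum_to_ext _ (fun i => w i * x i + w i * dl i)) by (intros; ring).
      rewrite sum_to_plus. assert (0 <= sum_to (fun i => w i * dl i) n).
      { apply sum_to_nonneg. intros i Hi. apply Rmult_le_pos; auto. }
      lra.
    + intros k Hk. cbv beta zeta.
      rewrite (sum_to_ext _ (fun i => (if SS k i then x i else 0) + (if SS k i then dl i else 0)))
        by (intros i _; destruct (SS k i); ring).
      rewrite sum_to_plus. specialize (P3 k Hk). cbv zeta in P3.
      destruct (classic (SS k l = true \/ SS k m = true)) as [T|T].
      * pose proof (Hg k Hk T) as E. split; [intros; lia|]. intros _.
        assert (0 <= gs k dl) by (apply sum_to_nonneg; intros i Hi; destruct (SS k i); auto; lra).
        destruct P3 as [_ P3]. specialize (P3 E). lra.
      * rewrite (sum_to_zero (fun i => if SS k i then dl i else 0)); [rewrite Rplus_0_r; auto|].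
        intros i Hi. destruct (SS k i) eqn:E; auto. apply Hdz; intros ->; apply T; auto.
    + intros i Hi Hu. rewrite P4 by auto. rewrite Hdz; [lra| |]; intros ->;
        [rewrite frac_union in Hu; auto; discriminate|rewrite frac_union in Hu; auto; discriminate].
    + intros i Hi Hu. destruct (classic (i = l \/ i = m)) as [T|T].
      * rewrite Hd1; auto; lra.
      * rewrite Hdz by tauto. rewrite Rplus_0_r. auto.
  - intros i Hi. destruct (classic (i = l \/ i = m)) as [T|T].
    + right. apply Hd1; auto.
    + rewrite Hdz by tauto. rewrite Rplus_0_r. apply x01; [auto|intros F; apply T, Hall; auto].
  - rewrite (sum_to_ext _ (fun i => c i * x i + c i * dl i)) by (intros; ring).
    rewrite sum_to_plus.
    assert (sum_to (fun i => c i * dl i) n <=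
      sum_to (fun i => (if Nat.eqb i l then c l * (1 - x l) else 0) + (if Nat.eqb i m then c m * (1 - x m) else 0)) n).
    { apply sum_to_le. intros i Hi. pose proof (hc_nonneg i Hi).
      assert (0 <= c l * (1 - x l)) by (apply Rmult_le_pos; [apply hc_nonneg; destruct Fl; lia|destruct Fl; lra]).
      assert (0 <= c m * (1 - x m)) by (apply Rmult_le_pos; [apply hc_nonneg; destruct Fm; lia|destruct Fm; lra]).
      unfold dl. destruct (Nat.eqb_spec i l); destruct (Nat.eqb_spec i m); simpl; subst; lra. }
    rewrite sum_to_plus in H.
    rewrite (sum_to_point (fun i => if Nat.eqb i l then c l * (1 - x l) else 0) n l) in H;
      [|destruct Fl; lia|intros i _ Hne; destruct (Nat.eqb_spec i l); [lia|auto]].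
    rewrite (sum_to_point (fun i => if Nat.eqb i m then c m * (1 - x m) else 0) n m) in H;
      [|destruct Fm; lia|intros i _ Hne; destruct (Nat.eqb_spec i m); [lia|auto]].
    rewrite !Nat.eqb_refl in H. lra.
Qed.

Lemma RH k l m : (1 <= k <= K)%nat -> SS k l = true -> SS k m = true -> l <> m -> frac l -> frac m ->
  (forall j, (1 <= j <= n)%nat -> frac j -> j = l \/ j = m) -> x l + x m = 1 -> w m <= w l ->
  exists xb, inP eps n c w b tau rho xb /\ is01 n xb /\
    sum_to (fun i => c i * xb i) n = sum_to (fun i => c i * x i) n + (c l - c m) * x m.
Proof.
  intros Hk Sl Sm Hne Fl Fm Hall Hs Hw.
  set (dl := fun i => if Nat.eqb i l then 1 - x l else if Nat.eqb i m then - x m else 0).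
  assert (Hdz : forall i, i <> l -> i <> m -> dl i = 0).
  { intros i H1 H2. unfold dl. destruct (Nat.eqb_spec i l); destruct (Nat.eqb_spec i m); lia || lra. }
  assert (Hdl : dl l = 1 - x l) by (unfold dl; rewrite Nat.eqb_refl; auto).
  assert (Hdm : dl m = - x m) by (unfold dl; rewrite Nat.eqb_refl; destruct (Nat.eqb_spec m l); [lia|auto]).
  assert (Hl : (1 <= l <= n)%nat) by (destruct Fl; lia).
  assert (Hm : (1 <= m <= n)%nat) by (destruct Fm; lia).
  assert (Sum : forall g, sum_to (fun i => g i * dl i) n = g l * (1 - x l) + g m * (- x m)).
  { intros g. rewrite (sum_two _ n l m) by (auto; intros i _ H1 H2; rewrite Hdz; auto; ring).
    rewrite Hdl, Hdm. ring. }
  destruct hP as [P1 [P2 [P3 [P4 P5]]]].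
  exists (fun i => x i + dl i). split; [|split].
  - unfold inP. split; [|split; [|split; [|split]]].
    + rewrite Hdz, P1 by (destruct Fl, Fm; lia). ring.
    + rewrite (sum_to_ext _ (fun i => w i * x i + w i * dl i)) by (intros; ring).
      rewrite sum_to_plus, Sum. assert (0 <= (w l - w m) * x m) by (apply Rmult_le_pos; destruct Fm; lra).
      replace (w l * (1 - x l) + w m * - x m) with ((w l - w m) * x m) by (rewrite <- Hs; ring). lra.
    + intros k' Hk'. cbv beta zeta.
      rewrite (sum_to_ext _ (fun i => (if SS k' i then x i else 0) + (if SS k' i then 1 else 0) * dl i))
        by (intros i _; destruct (SS k' i); ring).
      rewrite sum_to_plus, Sum. specialize (P3 k' Hk'). cbv zeta in P3.
      replace ((if SS k' l then 1 else 0) * (1 - x l) + (if SS k' m then 1 else 0) * - x m) with 0; [rewrite Rplus_0_r; auto|].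
      destruct (SS k' l) eqn:E1; destruct (SS k' m) eqn:E2; try lra.
      * rewrite (S_disj k' k l) in E2; auto. congruence.
      * rewrite (S_disj k' k m) in E1; auto. congruence.
    + intros i Hi Hu. rewrite P4 by auto. rewrite Hdz; [lra| |]; intros ->;
        [rewrite frac_union in Hu; auto; discriminate|rewrite frac_union in Hu; auto; discriminate].
    + intros i Hi Hu. destruct (Nat.eq_dec i l) as [->|H1]; [rewrite Hdl; lra|].
      destruct (Nat.eq_dec i m) as [->|H2]; [rewrite Hdm; destruct Fm; lra|].
      rewrite Hdz by auto. rewrite Rplus_0_r. auto.
  - intros i Hi. destruct (Nat.eq_dec i l) as [->|H1]; [rewrite Hdl; right; lra|].
    destruct (Nat.eq_dec i m) as [->|H2]; [rewrite Hdm; left; lra|].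
    rewrite Hdz by auto. rewrite Rplus_0_r. apply x01; auto. intros F. destruct (Hall i Hi F); lia.
  - rewrite (sum_to_ext _ (fun i => c i * x i + c i * dl i)) by (intros; ring).
    rewrite sum_to_plus, Sum. replace (1 - x l) with (x m) by lra. ring.
Qed.


Lemma BGe k : (1 <= k <= K)%nat -> nth1 rho k = M ->
  2 * ip (nth1 tau k) <= 2 * eps * sum_to (fun i => c i * x i) n.
Proof.
  intros Hk Hr. pose proof (LB2 k Hk) as H1. pose proof (gsc_ge k Hk) as H2. rewrite Hr in H2.
  pose proof (L_ge_a k) as H3. pose proof M_ge as H4.
  set (a := ip (nth1 tau k)) in *. set (L := ip (Nat.min (nth1 tau k + k) C)) in *.
  set (g := sum_to (fun i => if SS k i then c i * x i else 0) n) in *.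
  set (Cx := sum_to (fun i => c i * x i) n) in *.
  assert (HL : 0 < L) by apply ip_pos. assert (Ha : a <= 1) by apply ip_le1.
  assert (eM : 1 <= eps * INR M).
  { apply (Rmult_le_compat_l eps) in H4; [|lra]. replace (eps * (1 / eps)) with 1 in H4 by (field; lra). lra. }
  assert (eg : L <= eps * g).
  { apply (Rmult_le_compat_l eps) in H2; [|lra]. assert (L * 1 <= L * (eps * INR M)) by (apply Rmult_le_compat_l; lra). lra. }
  assert (eC : eps * (1 + (INR k - 1) * a + g) <= eps * Cx) by (apply Rmult_le_compat_l; lra).
  assert (ea : eps * a <= eps) by (assert (eps * a <= eps * 1) by (apply Rmult_le_compat_l; lra); lra).
  lra.
Qed.

Lemma BEq k i j : (1 <= k <= K)%nat -> SS k i = true -> SS k j = true -> frac j ->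
  (c i - c j) * x j <= 2 * eps * sum_to (fun i => c i * x i) n.
Proof.
  intros Hk Si Sj Fj. pose proof (LB2 k Hk) as H1. pose proof (gsc_ge k Hk) as H2.
  pose proof (L_ge_a k) as H3.
  apply L_inS in Si as [_ [Ci _]]. apply L_inS in Sj as [_ [_ Cj]].
  set (a := ip (nth1 tau k)) in *. set (L := ip (Nat.min (nth1 tau k + k) C)) in *.
  set (g := sum_to (fun i => if SS k i then c i * x i else 0) n) in *.
  set (Cx := sum_to (fun i => c i * x i) n) in *.
  assert (HL : 0 < L) by apply ip_pos. assert (Ha : a <= 1) by apply ip_le1.
  assert (Ha0 : 0 < a) by apply ip_pos.
  assert (Hg : 0 <= g) by (pose proof (Rmult_le_pos L (INR (nth1 rho k)) ltac:(lra) (pos_INR _)); lra).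
  assert (Hk0 : 1 <= INR k) by (replace 1 with (INR 1) by reflexivity; apply le_INR; lia).
  assert (Hd : c i - c j <= a * INR k * eps) by lra.
  assert (Hp : (c i - c j) * x j <= a * INR k * eps).
  { destruct Fj as [_ Fj]. destruct (Rle_dec (c i - c j) 0).
    - assert (0 <= a * INR k * eps) by (apply Rmult_le_pos; [apply Rmult_le_pos|]; lra).
      assert ((c i - c j) * x j <= 0 * x j) by (apply Rmult_le_compat_r; lra). lra.
    - assert ((c i - c j) * x j <= (c i - c j) * 1) by (apply Rmult_le_compat_l; lra). lra. }
  assert (eC : eps * (1 + (INR k - 1) * a + g) <= eps * Cx) by (apply Rmult_le_compat_l; lra).
  assert (ea : eps * a <= eps) by (assert (eps * a <= eps * 1) by (apply Rmult_le_compat_l; lra); lra).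
  assert (0 <= eps * g) by (apply Rmult_le_pos; lra).
  assert (0 <= eps * INR k * a) by (apply Rmult_le_pos; [apply Rmult_le_pos|]; lra).
  lra.
Qed.

Lemma main_sec : exists xb, inP eps n c w b tau rho xb /\ is01 n xb /\
  sum_to (fun i => c i * xb i) n <= (1 + 2 * eps) * sum_to (fun i => c i * x i) n.
Proof.
  pose proof (LB1 0 ltac:(lia)) as HC1. simpl in HC1.
  set (Cx := sum_to (fun i => c i * x i) n) in *.
  destruct (classic (exists l, frac l)) as [[l Fl]|NF].
  2:{ exists x. split; auto. split.
      - intros i Hi. apply x01; auto. intros F. apply NF. exists i. auto.
      - fold Cx. assert (0 <= eps * Cx) by (apply Rmult_le_pos; lra). lra. }
  assert (Hl : (1 <= l <= n)%nat) by (destruct Fl; lia).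
  destruct (L_union l (frac_union l Fl)) as [[k [Hk Sk]]|Si].
  -
    assert (inK : forall j, (1 <= j <= n)%nat -> frac j -> SS k j = true).
    { intros j Hj Fj. destruct (L_union j (frac_union j Fj)) as [[k' [Hk' Sk']]|Sj].
      - destruct (Nat.eq_dec k' k) as [->|Hne]; auto. exfalso.
        destruct (DIR k l Hk Sk Fl) as [u [Au [Ul Us]]].
        destruct (DIR k' j Hk' Sk' Fj) as [v [Av [Vj Vs]]].
        apply (TD u v l j Au Av Hl Hj Ul).
        + destruct (Req_dec (v l) 0) as [E|E]; auto. exfalso. apply Hne. apply (S_disj k' k l); auto.
        + auto.
        + destruct (Req_dec (u j) 0) as [E|E]; auto. exfalso. apply Hne. apply (S_disj k' k j); auto.
      - exfalso. destruct (DIR k l Hk Sk Fl) as [u [Au [Ul Us]]].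
        assert (Hjl : j <> l) by (intros ->; apply (Sinf_disj k l); auto).
        apply (TD u (e j) l j Au (Adm_e_inf j Fj Sj) Hl Hj Ul).
        + unfold e. destruct (Nat.eqb_spec l j); [lia|auto].
        + unfold e. rewrite Nat.eqb_refl. lra.
        + destruct (Req_dec (u j) 0) as [E|E]; auto. exfalso. apply (Sinf_disj k j); auto. }
    assert (no3 : forall a b' d, frac a -> frac b' -> frac d -> a <> b' -> a <> d -> b' <> d -> False).
    { intros a b' d Fa Fb Fd H1 H2 H3.
      assert (Ha : (1 <= a <= n)%nat) by (destruct Fa; lia).
      assert (Hb : (1 <= b' <= n)%nat) by (destruct Fb; lia).
      assert (Hd : (1 <= d <= n)%nat) by (destruct Fd; lia).
      apply (TD _ _ b' d (Adm_pair k a b' Hk (inK a Ha Fa) (inK b' Hb Fb) Fa Fb)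
                     (Adm_pair k a d Hk (inK a Ha Fa) (inK d Hd Fd) Fa Fd) Hb Hd);
      rewrite ?e_eq, ?(e_ne b' a), ?(e_ne d a), ?(e_ne b' d), ?(e_ne d b') by auto; lra. }
    pose proof (rho_rng k Hk) as Hr.
    destruct (Nat.eq_dec (nth1 rho k) M) as [EM|LM].
    + pose proof (BGe k Hk EM) as BG. fold Cx in BG.
      pose proof (L_inS k l Sk) as [_ [Cl _]].
      assert (Hgr : forall m, frac m -> forall k', (1 <= k' <= K)%nat -> (SS k' l = true \/ SS k' m = true) -> nth1 rho k' = M).
      { intros m Fm k' Hk' [T|T].
        - rewrite (S_disj k' k l); auto.
        - rewrite (S_disj k' k m); auto. apply inK; auto. destruct Fm; lia. }
      destruct (classic (exists m, frac m /\ m <> l)) as [[m [Fm Hml]]|Nm].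
      * assert (Hm : (1 <= m <= n)%nat) by (destruct Fm; lia).
        destruct (RU l m Fl Fm) as [xb [X1 [X2 X3]]].
        { intros j Hj Fj. destruct (Nat.eq_dec j l); auto. destruct (Nat.eq_dec j m); auto.
          exfalso. apply (no3 l m j); auto. }
        { apply Hgr; auto. }
        exists xb. split; auto. split; auto. fold Cx in X3.
        pose proof (L_inS k m (inK m Hm Fm)) as [_ [Cm _]].
        assert (c l * (1 - x l) <= ip (nth1 tau k)).
        { destruct Fl as [_ Fl']. pose proof (hc_nonneg l Hl).
          assert (c l * (1 - x l) <= c l * 1) by (apply Rmult_le_compat_l; lra). lra. }
        assert (c m * (1 - x m) <= ip (nth1 tau k)).
        { destruct Fm as [_ Fm']. pose proof (hc_nonneg m Hm).
          assert (c m * (1 - x m) <= c m * 1) by (apply Rmult_le_compat_l; lra). lra. }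
        lra.
      * destruct (RU l l Fl Fl) as [xb [X1 [X2 X3]]].
        { intros j Hj Fj. destruct (Nat.eq_dec j l); auto. exfalso. apply Nm. exists j. auto. }
        { apply Hgr; auto. }
        exists xb. split; auto. split; auto. fold Cx in X3.
        assert (c l * (1 - x l) <= ip (nth1 tau k)).
        { destruct Fl as [_ Fl']. pose proof (hc_nonneg l Hl).
          assert (c l * (1 - x l) <= c l * 1) by (apply Rmult_le_compat_l; lra). lra. }
        lra.
    + assert (Sl : ~ slack k) by (intros [E _]; lia).
      destruct (INT k l Hk Sl Sk Fl) as [m [Hml [Sm Fm]]].
      assert (Hall : forall j, (1 <= j <= n)%nat -> frac j -> j = l \/ j = m).
      { intros j Hj Fj. destruct (Nat.eq_dec j l); auto. destruct (Nat.eq_dec j m); auto.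
        exfalso. apply (no3 l m j); auto. }
      assert (Hs : x l + x m = 1).
      { apply (PAIR k); auto; try lia. }
      destruct (Rle_dec (w m) (w l)) as [Hw|Hw].
      * destruct (RH k l m Hk Sk Sm ltac:(auto) Fl Fm Hall Hs Hw) as [xb [X1 [X2 X3]]].
        exists xb. split; auto. split; auto. fold Cx in X3. rewrite X3.
        pose proof (BEq k l m Hk Sk Sm Fm). fold Cx in H. lra.
      * destruct (RH k m l Hk Sm Sk ltac:(auto) Fm Fl) as [xb [X1 [X2 X3]]].
        { intros j Hj Fj. destruct (Hall j Hj Fj); auto. }
        { lra. }
        { lra. }
        exists xb. split; auto. split; auto. fold Cx in X3. rewrite X3.
        pose proof (BEq k m l Hk Sm Sk Fl). fold Cx in H. lra.
  -
    assert (Hall : forall j, (1 <= j <= n)%nat -> frac j -> j = l \/ j = l).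
    { intros j Hj Fj. left. destruct (Nat.eq_dec j l); auto. exfalso.
      destruct (L_union j (frac_union j Fj)) as [[k' [Hk' Sk']]|Sj].
      - destruct (DIR k' j Hk' Sk' Fj) as [v [Av [Vj Vs]]].
        apply (TD (e l) v l j (Adm_e_inf l Fl Si) Av Hl Hj).
        + unfold e. rewrite Nat.eqb_refl. lra.
        + destruct (Req_dec (v l) 0) as [E|E]; auto. exfalso. apply (Sinf_disj k' l); auto.
        + auto.
        + unfold e. destruct (Nat.eqb_spec j l); [lia|auto].
      - apply (TD (e l) (e j) l j (Adm_e_inf l Fl Si) (Adm_e_inf j Fj Sj) Hl Hj); unfold e;
          rewrite ?Nat.eqb_refl; destruct (Nat.eqb_spec l j); try lia; destruct (Nat.eqb_spec j l); try lia; lra. }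
    destruct (RU l l Fl Fl Hall) as [xb [X1 [X2 X3]]].
    { intros k Hk [T|T]; exfalso; apply (Sinf_disj k l); auto. }
    exists xb. split; auto. split; auto. fold Cx in X3.
    pose proof (L_inSinf l Si) as [_ Cl]. pose proof ipC_le_eps.
    assert (c l * (1 - x l) <= eps).
    { destruct Fl as [_ Fl']. pose proof (hc_nonneg l Hl).
      assert (c l * (1 - x l) <= c l * 1) by (apply Rmult_le_compat_l; lra). lra. }
    assert (eps * 1 <= eps * Cx) by (apply Rmult_le_compat_l; lra).
    lra.
Qed.

End Main.

Theorem lemma4 (n : nat) (c w : nat -> R) (b eps : R) (tau rho : list nat)
  (hn : (1 <= n)%nat)
  (hc_nonneg : forall i, (1 <= i <= n)%nat -> 0 <= c i)
  (hw_nonneg : forall i, (1 <= i <= n)%nat -> 0 <= w i)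
  (hc1 : c 1%nat = 1)
  (hc_sorted : forall i j, (1 <= i <= j)%nat -> (j <= n)%nat -> c j <= c i)
  (heps : 0 < eps <= 1 / 256)
  (htau : in_Gamma eps tau)
  (hrho : valid_rho eps tau rho)
  (xs : nat -> R)
  (hxs : extreme_point n (inP eps n c w b tau rho) xs) :
  exists xb : nat -> R,
    inP eps n c w b tau rho xb /\ is01 n xb /\
    sum_to (fun i => c i * xb i) n <= (1 + 2 * eps) * sum_to (fun i => c i * xs i) n.
Proof.
  destruct hxs as [hP hext].
  eapply main_sec; eauto.
Qed.
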